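(* Let $S_n=(E_{n-m},K_m)$ be a word-representable split graph with $m\geq 3$, and let $d$ be an integer with $2\leq d\leq \frac{m+1}{2}$. Then $E_{n-m}$ contains at most $m$ vertices of degree $d$ having pairwise distinct neighbourhoods. Moreover, this bound is achievable: for every such $m$ and $d$ there is a word-representable split graph $(E_{n-m},K_m)$ whose independent set contains $m$ vertices of degree $d$ with pairwise distinct neighbourhoods.
   Context: A graph $G=(V,E)$ is word-representable if there exists a word $w$ over the alphabet $V$ such that for all distinct $x,y\in V$, the letters $x$ and $y$ alternate in $w$ if and only if $xy\in E$ (alternation meaning that deleting all letters other than $x$ and $y$ leaves $xyxy\cdots$ or $yxyx\cdots$). The notation $S_n=(E_{n-m},K_m)$ denotes a split graph on $n$ vertices whose vertex set is partitioned into a maximal clique $K_m$ on $m$ vertices and an independent set $E_{n-m}$ on $n-m$ vertices. *)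

(* Defs.v *)
From mathcomp Require Import all_boot.
Set Implicit Arguments. Unset Strict Implicit. Unset Printing Implicit Defensive.

Definition simple_graph (T : finType) (e : rel T) : Prop :=
  irreflexive e /\ symmetric e.

(* x and y alternate in w: deleting all other letters leaves a word with no two
   equal consecutive letters, i.e. xyxy... or yxyx... *)
Definition alternate (T : eqType) (w : seq T) (x y : T) : bool :=
  sorted (fun a b => a != b) [seq z <- w | (z == x) || (z == y)].

Definition represents (T : finType) (e : rel T) (w : seq T) : Prop :=
  (forall x : T, x \in w) /\
  (forall x y : T, x != y -> (alternate w x y <-> e x y)).

Definition word_representable (T : finType) (e : rel T) : Prop :=
  exists w : seq T, represents e w.

Definition is_clique (T : finType) (e : rel T) (K : {set T}) : Prop :=
  forall x y, x \in K -> y \in K -> x != y -> e x y.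

Definition is_independent (T : finType) (e : rel T) (I : {set T}) : Prop :=
  forall x y, x \in I -> y \in I -> ~~ e x y.

(* Split graph (E, K): V partitioned into a maximal clique K and an independent set E. *)
Definition split_graph (T : finType) (e : rel T) (E K : {set T}) : Prop :=
  [/\ [disjoint E & K], E :|: K = [set: T],
      is_clique e K, is_independent e E &
      (forall v, v \notin K -> exists2 u, u \in K & ~~ e v u)].

Definition nbhd (T : finType) (e : rel T) (v : T) : {set T} := [set u | e v u].
Definition degree (T : finType) (e : rel T) (v : T) : nat := #|nbhd e v|.

(* Main.v *)
Require Import Defs.
From mathcomp Require Import all_boot zify.
Set Implicit Arguments. Unset Strict Implicit. Unset Printing Implicit Defensive.

Section Crit.
Variable T : eqType.

Definition cnt (w : seq T) p x := count_mem x (take p w).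
Definition dom (w : seq T) x y := forall p, cnt w p y <= cnt w p x <= (cnt w p y).+1.

Lemma cntS z (w : seq T) p a : cnt (z :: w) p.+1 a = (z == a) + cnt w p a.
Proof. by rewrite /cnt /= eq_sym. Qed.

Lemma path_alt (w : seq T) : forall x y : T, x != y ->
  path (fun a b => a != b) x [seq z <- w | (z == x) || (z == y)] <-> dom w y x.
Proof.
elim: w => [|z w IH] x y xy.
  by split => // _ p; rewrite /cnt /=.
rewrite /=.
case: (eqVneq z x) => [zx|zx] /=.
  subst z.
  rewrite eqxx /=; split => // H.
  by move: (H 1); rewrite /cnt /= take0 /= eqxx (negbTE xy).
case: (eqVneq z y) => [zy|zy] /=.
  subst z.
  rewrite xy /=.
  have -> : [seq z <- w | (z == x) || (z == y)] = [seq z <- w | (z == y) || (z == x)].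
    by apply: eq_filter => a; rewrite orbC.
  rewrite (IH y x); last by rewrite eq_sym.
  split => H p.
    case: p => [|p]; first by rewrite /cnt take0.
    rewrite !cntS eqxx (negbTE zx) /=; move: (H p); lia.
  move: (H p.+1); rewrite !cntS eqxx (negbTE zx) /=; lia.
rewrite (IH x y xy); split => H p.
  case: p => [|p]; first by rewrite /cnt take0.
  by rewrite !cntS (negbTE zx) (negbTE zy) /=; apply: H.
by move: (H p.+1); rewrite !cntS (negbTE zx) (negbTE zy).
Qed.

Lemma alt_dom (w : seq T) x y : x != y ->
  alternate w x y <-> dom w x y \/ dom w y x.
Proof.
move=> xy; rewrite /alternate.
have Hy : path (fun a b => a != b) y [seq z <- w | (z == x) || (z == y)] <-> dom w x y.
  have -> : [seq z <- w | (z == x) || (z == y)] = [seq z <- w | (z == y) || (z == x)].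
    by apply: eq_filter => a; rewrite orbC.
  by apply: path_alt; rewrite eq_sym.
have Hx := path_alt w xy.
have key : sorted (fun a b => a != b) [seq z <- w | (z == x) || (z == y)] =
   path (fun a b => a != b) x [seq z <- w | (z == x) || (z == y)]
   || path (fun a b => a != b) y [seq z <- w | (z == x) || (z == y)].
  have : all (fun z => (z == x) || (z == y)) [seq z <- w | (z == x) || (z == y)].
    by apply/allP => z; rewrite mem_filter => /andP[].
  case: [seq z <- w | (z == x) || (z == y)] => [|a s] //= /andP[/orP[]/eqP-> _].
    by rewrite eqxx /= eq_sym xy.
  by rewrite eqxx xy /= orbF.
rewrite key; split.
  by case/orP => [/Hx|/Hy]; [right|left].
by case => [/Hy|/Hx] ->; rewrite ?orbT.
Qed.

Lemma notin_take (w : seq T) n y : n <= index y w -> y \notin take n w.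
Proof.
move=> H; apply/negP => yt.
have := index_cat y (take n w) (drop n w); rewrite cat_take_drop yt => E.
have : index y (take n w) < size (take n w) by rewrite index_mem.
rewrite size_take -E => h; move: h; case: (ltnP n (size w)) => h1 h2; lia.
Qed.

Lemma dom_first (w : seq T) x y : x != y -> x \in w -> index x w < index y w ->
  ~ dom w y x.
Proof.
move=> xy xw lt H; move: (H (index x w).+1).
have -> : cnt w (index x w).+1 y = 0.
  by apply/eqP; rewrite /cnt -leqn0 leqNgt -has_count has_pred1 notin_take.
have : 0 < cnt w (index x w).+1 x.
  rewrite /cnt -has_count has_pred1 (take_nth x); last by rewrite index_mem.
  by rewrite nth_index // mem_rcons mem_head.
lia.
Qed.

End Crit.

Lemma four_pt (T : eqType) (w : seq T) v x1 x2 x3 x4 :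
  dom w x1 x2 -> dom w x2 x3 -> dom w x3 x4 -> dom w x1 x4 ->
  let A x := dom w v x \/ dom w x v in
  (A x1 -> A x3 -> A x2 \/ A x4) /\ (A x2 -> A x4 -> A x1 \/ A x3).
Proof.
move=> h12 h23 h34 h14 A; split.
  case=> a1 [] a3.
  - by left; left => p; move: (h12 p) (h23 p) (h34 p) (h14 p) (a1 p) (a3 p); lia.
  - by left; left => p; move: (h12 p) (h23 p) (h34 p) (h14 p) (a1 p) (a3 p); lia.
  - by right; left => p; move: (h12 p) (h23 p) (h34 p) (h14 p) (a1 p) (a3 p); lia.
  - by left; right => p; move: (h12 p) (h23 p) (h34 p) (h14 p) (a1 p) (a3 p); lia.
case=> a2 [] a4.
- by right; left => p; move: (h12 p) (h23 p) (h34 p) (h14 p) (a2 p) (a4 p); lia.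
- by right; left => p; move: (h12 p) (h23 p) (h34 p) (h14 p) (a2 p) (a4 p); lia.
- by left; right => p; move: (h12 p) (h23 p) (h34 p) (h14 p) (a2 p) (a4 p); lia.
- by right; right => p; move: (h12 p) (h23 p) (h34 p) (h14 p) (a2 p) (a4 p); lia.
Qed.

Definition dist m s i := if s <= i then i - s else i + m - s.
Definition pos m s k := if s + k < m then s + k else s + k - m.

Lemma pos_dist m s i : s < m -> i < m -> pos m s (dist m s i) = i.
Proof. rewrite /pos /dist => *; case: (leqP s i) => h; case: ltnP => h'; lia. Qed.
Lemma dist_pos m s k : s < m -> k < m -> dist m s (pos m s k) = k.
Proof. rewrite /pos /dist => *; case: (ltnP (s + k) m) => h; case: leqP => h'; lia. Qed.
Lemma pos_lt m s k : s < m -> k < m -> pos m s k < m.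
Proof. rewrite /pos => *; case: (ltnP (s + k) m) => h; lia. Qed.
Lemma dist_lt m s i : s < m -> i < m -> dist m s i < m.
Proof. rewrite /dist => *; case: (leqP s i) => h; lia. Qed.

Section Arc.
Variables (m : nat) (P : nat -> bool).
Hypothesis H1 : forall i j k l, i < j < k -> k < l < m -> P i -> P k -> P j || P l.
Hypothesis H2 : forall i j k l, i < j < k -> k < l < m -> P j -> P l -> P i || P k.

Definition pr i := if i == 0 then m.-1 else i.-1.
Definition entry s := [&& s < m, P s & ~~ P (pr s)].

Lemma entry_uniq s1 s2 : entry s1 -> entry s2 -> s1 = s2.
Proof.
wlog: s1 s2 / s1 <= s2 => [W e1 e2|].
  by case: (leqP s1 s2) => h; [apply: W | apply/esym; apply: W => //; apply: ltnW].
rewrite /entry /pr leq_eqVlt => /orP[/eqP //|lt] /and3P[l1 p1 n1] /and3P[l2 p2 n2].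
have s2n : (s2 == 0) = false by apply/negbTE; rewrite -lt0n; apply: leq_ltn_trans lt.
rewrite s2n in n2.
have d1 : s2.-1 != s1 by apply/eqP => e; rewrite e p1 in n2.
case: (eqVneq s1 0) n1 => [z1|nz1] n1.
  subst s1.
  have d2 : s2 != m.-1 by apply/eqP => e; rewrite -e p2 in n1.
  have := H1 (i:=0) (j:=s2.-1) (k:=s2) (l:=m.-1).
  have -> : 0 < s2.-1 < s2 by move: d1 lt; lia.
  have -> : s2 < m.-1 < m by move: d2 l2; lia.
  by move=> /(_ isT isT p1 p2); rewrite (negbTE n1) (negbTE n2).
have := H2 (i:=s1.-1) (j:=s1) (k:=s2.-1) (l:=s2).
have -> : s1.-1 < s1 < s2.-1 by move: d1 lt nz1; lia.
have -> : s2.-1 < s2 < m by move: lt l2; lia.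
by move=> /(_ isT isT p1 p2); rewrite (negbTE n1) (negbTE n2).
Qed.

Lemma pr_pos s k : s < m -> 0 < k < m -> pr (pos m s k) = pos m s k.-1.
Proof.
rewrite /pr /pos => h1 h2.
case: (ltnP (s + k) m) => h3; case: (ltnP (s + k.-1) m) => h4;
  case: eqP => h5; lia.
Qed.

Lemma desc n : (forall s, s < m -> P s -> P (pr s)) -> n < m -> P n ->
  forall i, i <= n -> P i.
Proof.
move=> Hn nm Pn.
suff K : forall k, k <= n -> P (n - k).
  by move=> i iln; have := K (n - i) (leq_subr _ _); rewrite subKn.
elim=> [|k IH] kn; first by rewrite subn0.
have := Hn (n - k) (leq_ltn_trans (leq_subr _ _) nm) (IH (ltnW kn)).
rewrite /pr; have -> : (n - k == 0) = false by apply/negbTE; move: kn; lia.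
by have -> : (n - k).-1 = n - k.+1 by move: kn; lia.
Qed.

Lemma entry_exists : (exists i, i < m /\ P i) -> (exists j, j < m /\ ~~ P j) ->
  exists s, entry s.
Proof.
move=> [i [im Pi]] [j [jm nPj]].
case: (boolP [exists s : 'I_m, entry s]) => [/existsP [s es]|]; first by exists s.
rewrite negb_exists => /forallP Hn.
have Hs : forall s, s < m -> P s -> P (pr s).
  move=> s sm Ps; have := Hn (Ordinal sm); rewrite /entry /= sm Ps /=.
  by case: (P (pr s)).
have P0 := desc Hs im Pi (leq0n i).
have m0 : 0 < m by apply: leq_ltn_trans im.
have Pm := Hs 0 m0 P0; rewrite /pr eqxx in Pm.
have mm : m.-1 < m by rewrite ltn_predL.
have := desc Hs mm Pm (i:=j) ; rewrite -ltnS prednK // => /(_ jm).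
by rewrite (negbTE nPj).
Qed.

Lemma arc : (exists i, i < m /\ P i) -> (exists j, j < m /\ ~~ P j) ->
  exists s t, [/\ s < m, t <= m & forall i, i < m -> P i = (dist m s i < t)].
Proof.
move=> ex1 ex2.
have [s es] := entry_exists ex1 ex2.
have /and3P[sm Ps nPs] := es.
have [j [jm nPj]] := ex2.
have exQ : exists k, ~~ P (pos m s k).
  by exists (dist m s j); rewrite pos_dist.
pose t := ex_minn exQ.
have [Qt tmin] : ~~ P (pos m s t) /\ (forall k, ~~ P (pos m s k) -> t <= k).
  by rewrite /t; case: ex_minnP.
have tle : t <= dist m s j by apply: tmin; rewrite pos_dist.
have tm : t < m by apply: leq_ltn_trans tle (dist_lt _ _).
exists s, t; split => //; first exact: ltnW.
move=> i im.
have ie : pos m s (dist m s i) = i by rewrite pos_dist.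
have km := dist_lt sm im.
set k := dist m s i in ie km *.
case: (ltnP k t) => kt.
  apply/negPn/negP => nP.
  by have := tmin k; rewrite ie => /(_ nP); rewrite leqNgt kt.
apply/negbTE; case: (eqVneq k t) => [kt'|kt'].
  by rewrite -ie kt'.
have tk : t < k by rewrite ltn_neqAle eq_sym kt' kt.
apply/negP => Pi.
have exR : exists k', [&& t < k', k' <= k & P (pos m s k')].
  by exists k; rewrite tk leqnn ie Pi.
pose k' := ex_minn exR.
have [Rk' k'min] : [&& t < k', k' <= k & P (pos m s k')] /\
   (forall k2, [&& t < k2, k2 <= k & P (pos m s k2)] -> k' <= k2).
  by rewrite /k'; case: ex_minnP.
case/and3P: Rk' => tk' k'k Pk'.
have k'm : k' < m by apply: leq_ltn_trans km.
have e2 : entry (pos m s k').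
  rewrite /entry pos_lt // Pk' /= pr_pos //; last by rewrite k'm andbT; apply: leq_ltn_trans tk'.
  case: (eqVneq k'.-1 t) => [->//|ne].
  apply/negP => P1.
  have := k'min k'.-1; rewrite P1 andbT.
  have -> : t < k'.-1 by move: ne tk'; lia.
  have -> : k'.-1 <= k by move: k'k; lia.
  by move=> /(_ isT); move: tk'; lia.
have := entry_uniq es e2 => /(congr1 (dist m s)).
rewrite dist_pos // /dist leqnn subnn => e0.
by move: tk'; rewrite -e0.
Qed.

End Arc.

Theorem part1 (T : finType) (e : rel T) (E K : {set T}) (m d : nat) :
      simple_graph e -> split_graph e E K -> #|K| = m ->
      word_representable e ->
      3 <= m -> 2 <= d -> d.*2 <= m.+1 ->
      forall A : {set T},
        A \subset E ->
        (forall v, v \in A -> degree e v = d) ->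
        {in A &, injective (nbhd e)} ->
        #|A| <= m.
Proof.
move=> [irr sym] [dEK UEK clK indE maxK] cK [w [allin rep]] m3 d2 dm A AE degA injA.
have [x0 _] : exists x0, x0 \in K by apply/card_gt0P; rewrite cK; apply: leq_trans m3.
pose R := fun x y : T => index x w <= index y w.
pose L := sort R (enum K).
have sizeL : size L = m by rewrite size_sort -cardE.
have memL x : (x \in L) = (x \in K) by rewrite mem_sort mem_enum.
have uniqL : uniq L by rewrite sort_uniq enum_uniq.
have sortL : sorted R L by apply: sort_sorted => x y; apply: leq_total.
pose X i := nth x0 L i.
have XK i : i < m -> X i \in K by move=> im; rewrite -memL mem_nth // sizeL.
have Xlt i j : i < j -> j < m -> index (X i) w < index (X j) w.
  move=> ij jm.
  have le : R (X i) (X j).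
    apply: (sorted_leq_nth (leT := R)) => //; rewrite ?inE ?sizeL //;
      [ by move=> y x z; apply: leq_trans | by move=> x; apply: leqnn
      | exact: ltn_trans jm | exact: ltnW].
  rewrite ltn_neqAle (le : index (X i) w <= index (X j) w) andbT; apply/negP => /eqP eq.
  have : X i = X j.
    by rewrite -(nth_index x0 (allin (X i))) eq nth_index.
  move/eqP; rewrite nth_uniq ?sizeL //; last exact: ltn_trans jm.
  by move/eqP => ije; move: ij; rewrite ije ltnn.
have domK i j : i < j -> j < m -> dom w (X i) (X j).
  move=> ij jm.
  have ne : X i != X j.
    by apply/negP => /eqP eq; move: (Xlt i j ij jm); rewrite eq ltnn.
  have := (rep (X i) (X j) ne).2 (clK _ _ (XK i (ltn_trans ij jm)) (XK j jm) ne).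
  case/(alt_dom _ ne) => // H.
  by exfalso; apply: (dom_first ne (allin _) (Xlt i j ij jm)).
have vK v : v \in A -> v \notin K.
  by move=> vA; rewrite (disjointFr dEK (subsetP AE v vA)).
have nbK v u : v \in A -> e v u -> u \in K.
  move=> vA evu; apply/negPn/negP => uK.
  have uE : u \in E.
    have : u \in E :|: K by rewrite UEK inE.
    by rewrite inE (negbTE uK) orbF.
  by move: (indE v u (subsetP AE v vA) uE); rewrite evu.
have altE v x : v \in A -> x \in K -> (dom w v x \/ dom w x v) <-> e v x.
  move=> vA xK.
  have ne : v != x by apply/negP => /eqP eq; move: (vK v vA); rewrite eq xK.
  by rewrite -(alt_dom _ ne) (rep _ _ ne).
pose arcb v (s : 'I_m) := [exists t : 'I_m.+1, [forall i : 'I_m, e v (X i) == (dist m s i < t)]].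
have arcv v : v \in A -> exists s : 'I_m, arcb v s.
  move=> vA.
  have [s [t [sm tm Ht]]] : exists s t, [/\ s < m, t <= m & forall i, i < m -> e v (X i) = (dist m s i < t)].
    apply: arc.
    - move=> i j k l /andP[ij jk] /andP[kl lm] Pi Pk.
      have km : k < m := ltn_trans kl lm.
      have jm : j < m := ltn_trans jk km.
      have im : i < m := ltn_trans ij jm.
      have [H _] := four_pt v (domK i j ij jm) (domK j k jk km) (domK k l kl lm)
               (domK i l (ltn_trans ij (ltn_trans jk kl)) lm).
      case: (H _ _).
      + by apply/(altE v _ vA (XK i im)).
      + by apply/(altE v _ vA (XK k km)).
      + by move/(altE v _ vA (XK j jm)) => ->.
      + by move/(altE v _ vA (XK l lm)) => ->; rewrite orbT.
    - move=> i j k l /andP[ij jk] /andP[kl lm] Pj Pl.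
      have km : k < m := ltn_trans kl lm.
      have jm : j < m := ltn_trans jk km.
      have im : i < m := ltn_trans ij jm.
      have [_ H] := four_pt v (domK i j ij jm) (domK j k jk km) (domK k l kl lm)
               (domK i l (ltn_trans ij (ltn_trans jk kl)) lm).
      case: (H _ _).
      + by apply/(altE v _ vA (XK j jm)).
      + by apply/(altE v _ vA (XK l lm)).
      + by move/(altE v _ vA (XK i im)) => ->.
      + by move/(altE v _ vA (XK k km)) => ->; rewrite orbT.
    - have : 0 < #|nbhd e v| by rewrite /degree in degA; rewrite degA //; apply: leq_trans d2.
      case/card_gt0P => u; rewrite inE => evu.
      have uK := nbK v u vA evu.
      exists (index u L); rewrite -sizeL index_mem memL uK; split => //.
      by rewrite /X nth_index // memL.
    - have [u uK nevu] := maxK v (vK v vA).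
      exists (index u L); rewrite -sizeL index_mem memL uK; split => //.
      by rewrite /X nth_index // memL.
  exists (Ordinal sm); apply/existsP; exists (Ordinal (tm : t < m.+1)).
  by apply/forallP => i; rewrite /= Ht.
have m0 : 0 < m by apply: leq_trans m3.
pose G v := odflt (Ordinal m0) [pick s : 'I_m | arcb v s].
have GP v : v \in A -> arcb v (G v).
  move=> vA; rewrite /G; case: pickP => [s //|].
  by have [s as_] := arcv v vA => /(_ s); rewrite as_.
have sub v1 v2 (t1 t2 : 'I_m.+1) (s : 'I_m) : t1 <= t2 ->
    (forall i : 'I_m, e v1 (X i) = (dist m s i < t1)) ->
    (forall i : 'I_m, e v2 (X i) = (dist m s i < t2)) ->
    v1 \in A -> nbhd e v1 \subset nbhd e v2.
  move=> t12 H1 H2 v1A; apply/subsetP => u; rewrite !inE => ev1u.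
  have uK := nbK v1 u v1A ev1u.
  have im : index u L < m by rewrite -sizeL index_mem memL.
  have Xu : X (index u L) = u by rewrite /X nth_index // memL.
  move: (H1 (Ordinal im)) (H2 (Ordinal im)); rewrite /= Xu ev1u => /esym h1 ->.
  exact: leq_trans h1 t12.
have injG : {in A &, injective G}.
  move=> v1 v2 v1A v2A eG.
  have /existsP [t1 /forallP H1] := GP v1 v1A.
  have /existsP [t2 /forallP H2] := GP v2 v2A.
  rewrite eG in H1.
  have H1' : forall i : 'I_m, e v1 (X i) = (dist m (G v2) i < t1) by move=> i; apply/eqP.
  have H2' : forall i : 'I_m, e v2 (X i) = (dist m (G v2) i < t2) by move=> i; apply/eqP.
  have c1 := degA v1 v1A; have c2 := degA v2 v2A; rewrite /degree in c1 c2.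
  apply: injA => //; apply/eqP.
  case: (leqP t1 t2) => t12.
    by rewrite eqEcard (sub _ _ _ _ _ t12 H1' H2' v1A) c1 c2 leqnn.
  rewrite eq_sym eqEcard (sub _ _ _ _ _ (ltnW t12) H2' H1' v2A) c1 c2 leqnn //.
have := card_in_imset injG.
move=> <-.
by rewrite -[m in X in _ <= X]card_ord; apply: max_card.
Qed.

Section Slots.
Variable T : eqType.

Lemma alternate_sym (w : seq T) x y : alternate w x y = alternate w y x.
Proof. by rewrite /alternate; congr sorted; apply: eq_filter => z; rewrite orbC. Qed.

Lemma nalt_cat (w1 w2 w3 : seq T) x y : y \notin w2 ->
  ~ alternate (w1 ++ x :: w2 ++ x :: w3) x y.
Proof.
move=> yw2; rewrite /alternate filter_cat /= eqxx /= filter_cat /= eqxx /=.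
set f2 := [seq z <- w2 | _].
have allx : all (pred1 x) f2.
  apply/allP => z; rewrite mem_filter => /andP[/orP[//|/eqP ->]] yin.
  by rewrite yin in yw2.
move=> H.
have : sorted (fun a b => a != b) (x :: f2 ++ x :: [seq z <- w3 | (z == x) || (z == y)]).
  move: H; elim: [seq z <- w1 | (z == x) || (z == y)] => [|a l IH] //=.
  by move/path_sorted/IH.
clear H; case: f2 allx => [|b f2] /=; first by rewrite eqxx.
by case/andP => /eqP -> _; rewrite eqxx.
Qed.

Lemma path_filter_iota (Pn : pred nat) (Q : rel nat) :
  (forall g g', g < g' -> Pn g -> Pn g' -> (forall h, g < h < g' -> ~~ Pn h) -> Q g g') ->
  forall n a g, g < a -> Pn g -> (forall h, g < h < a -> ~~ Pn h) ->
  path Q g [seq z <- iota a n | Pn z].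
Proof.
move=> HQ; elim=> [|n IH] a g ga Pg Hb //=.
case: ifP => Pa /=.
  rewrite HQ //= IH // => h; lia.
apply: IH => // [|h /andP[h1 h2]]; first exact: ltnW.
case: (eqVneq h a) => [->|ne]; first by rewrite Pa.
by apply: Hb; move: h1 h2 ne; lia.
Qed.

Lemma sorted_filter_iota (Pn : pred nat) (Q : rel nat) :
  (forall g g', g < g' -> Pn g -> Pn g' -> (forall h, g < h < g' -> ~~ Pn h) -> Q g g') ->
  forall n a, sorted Q [seq z <- iota a n | Pn z].
Proof.
move=> HQ; elim=> [|n IH] a //=.
case: ifP => Pa //=.
apply: path_filter_iota => // h; lia.
Qed.

Lemma filter_pmap (f : nat -> option T) (P : pred T) l :
  [seq z <- pmap f l | P z] = pmap f [seq n <- l | if f n is Some z then P z else false].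
Proof.
elim: l => [|n l IH] //=.
case E: (f n) => [z|] /=; last by []. 
case: (P z) => /=; by rewrite ?E IH.
Qed.

Lemma path_pmap (f : nat -> option T) l n a :
  f n = Some a -> all (fun k => f k != None) l ->
  path (fun k k' => f k != f k') n l -> path (fun a b => a != b) a (pmap f l).
Proof.
elim: l n a => [|k l IH] n a //= fn /andP[fk al] /andP[nk pl].
case E: (f k) fk => [b|] // _ /=.
rewrite (IH k b) // andbT.
by move: nk; rewrite fn E; apply: contra => /eqP ->.
Qed.

Lemma sorted_pmap (f : nat -> option T) l :
  all (fun k => f k != None) l ->
  sorted (fun k k' => f k != f k') l -> sorted (fun a b => a != b) (pmap f l).
Proof.
case: l => [|n l] //= /andP[fn al] pl.
case E: (f n) fn => [a|] // _ /=.
exact: path_pmap E al pl.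
Qed.

Lemma alt_slots (f : nat -> option T) N x y :
  (forall s s', s < s' -> (f s == Some x) || (f s == Some y) ->
     (f s' == Some x) || (f s' == Some y) ->
     (forall h, s < h < s' -> ~~ ((f h == Some x) || (f h == Some y))) -> f s != f s') ->
  alternate (pmap f (iota 0 N)) x y.
Proof.
move=> H; rewrite /alternate filter_pmap.
set Pn := (fun n => if f n is Some z then (z == x) || (z == y) else false).
have ePn : forall n, Pn n = (f n == Some x) || (f n == Some y).
  by move=> n; rewrite /Pn; case: (f n) => [z|] //=.
apply: sorted_pmap.
  by apply/allP => k; rewrite mem_filter => /andP[]; rewrite /Pn; case: (f k).
apply: sorted_filter_iota => g g' gg' Pg Pg' Hb.
apply: H => //; rewrite -?ePn // => h hh; rewrite -ePn; exact: Hb.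
Qed.

Lemma pmap_iota_split (f : nat -> option T) N s s' x :
  s < s' < N -> f s = Some x -> f s' = Some x ->
  pmap f (iota 0 N) = pmap f (iota 0 s) ++ x :: pmap f (iota s.+1 (s' - s.+1)) ++
                       x :: pmap f (iota s'.+1 (N - s'.+1)).
Proof.
move=> /andP[ss' s'N] fs fs'.
have eN : N = s + ((s' - s.+1).+1 + (N - s'.+1).+1) by lia.
rewrite [in LHS]eN iotaD add0n iotaD /=.
have -> : s + (s' - s.+1).+1 = s' by lia.
by rewrite !pmap_cat /= fs /= pmap_cat /= fs'.
Qed.

Lemma nalt_slots (f : nat -> option T) N s s' x y :
  s < s' < N -> f s = Some x -> f s' = Some x ->
  (forall h, s < h < s' -> f h != Some y) ->
  ~ alternate (pmap f (iota 0 N)) x y.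
Proof.
move=> H fs fs' Hb; rewrite (pmap_iota_split H fs fs').
apply: nalt_cat; rewrite mem_pmap; apply/mapP => [[h]].
rewrite mem_iota => /andP[h1 h2] /esym fh.
suff: s < h < s' by move/Hb; rewrite fh eqxx.
by move: h1 h2 H; lia.
Qed.

End Slots.

Section Constr.
Variables n d : nat.
Local Notation m := n.+1.
Hypotheses (m3 : 3 <= m) (d2 : 2 <= d) (dm : d.*2 <= m.+1).

Definition T2 : finType := ('I_m + 'I_m)%type.

Definition e2 : rel T2 := fun x y => match x, y with
 | inl i, inl j => i != j
 | inl i, inr a => dist m a i < d
 | inr a, inl i => dist m a i < d
 | inr _, inr _ => false end.

Definition f2 (s : nat) : option T2 :=
  let g := s %/ 3 in
  if s %% 3 == 0 then omap inr [pick c : 'I_m | c * m.+1 + d == g]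
  else if s %% 3 == 1 then
    (if (g %/ m <= m) && (g %/ m != (g %% m).+1) then Some (inr (inord (g %% m))) else None)
  else if g %/ m <= m then Some (inl (inord (g %% m))) else None.

Definition N2 := 3 * (m * m.+1).+1.
Definition w2 := pmap f2 (iota 0 N2).

Lemma fK s (i : 'I_m) : f2 s = Some (inl i) <-> exists q, q <= m /\ s = 3 * (q * m + i) + 2.
Proof.
rewrite /f2; split.
  case: ifP => h0; first by case: pickP.
  case: ifP => h1; first by case: ifP.
  case: ifP => // hq [] <-; exists (s %/ 3 %/ m); split => //.
  rewrite inordK ?ltn_pmod //.
  have := divn_eq (s %/ 3) m; move: h0 h1; lia.
move=> [q [qm ->]].
have -> : (3 * (q * m + i) + 2) %% 3 = 2 by lia.
have -> : (3 * (q * m + i) + 2) %/ 3 = q * m + i by lia.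
have -> : (q * m + i) %/ m = q by have := ltn_ord i; nia.
have -> : (q * m + i) %% m = i by rewrite modnMDl modn_small.
by rewrite qm inord_val.
Qed.

Lemma fE s (a : 'I_m) : f2 s = Some (inr a) <->
  s = 3 * (a * m.+1 + d) \/ exists q, [/\ q <= m, q != a.+1 & s = 3 * (q * m + a) + 1].
Proof.
rewrite /f2; split.
  case: ifP => h0.
    case: pickP => [c /eqP hc|] //= [] ec; subst c; left.
    move: h0 hc; lia.
  case: ifP => h1; last by case: ifP.
  case: ifP => // /andP[hq hq2] [] <-; right; exists (s %/ 3 %/ m).
  rewrite inordK ?ltn_pmod //; split => //.
  have := divn_eq (s %/ 3) m; move: h0 h1; lia.
case=> [->|[q [qm qa ->]]].
  have -> : (3 * (a * m.+1 + d)) %% 3 = 0 by lia.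
  rewrite eqxx.
  have -> : (3 * (a * m.+1 + d)) %/ 3 = a * m.+1 + d by lia.
  case: pickP => [c /eqP hc|]; last by move/(_ a); rewrite eqxx.
  congr (Some (inr _)); apply: val_inj => /=; move: hc; nia.
have -> : (3 * (q * m + a) + 1) %% 3 = 1 by lia.
have -> : (3 * (q * m + a) + 1) %/ 3 = q * m + a by lia.
have -> : (q * m + a) %/ m = q by have := ltn_ord a; nia.
have -> : (q * m + a) %% m = a by rewrite modnMDl modn_small.
by rewrite qm qa inord_val.
Qed.

Lemma Kslot (i : 'I_m) q : q <= m -> f2 (3 * (q * m + i) + 2) = Some (inl i).
Proof. by move=> qm; apply/fK; exists q. Qed.
Lemma Eres (a : 'I_m) q : q <= m -> q != a.+1 -> f2 (3 * (q * m + a) + 1) = Some (inr a).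
Proof. by move=> qm qa; apply/fE; right; exists q. Qed.
Lemma Etend (a : 'I_m) : f2 (3 * (a * m.+1 + d)) = Some (inr a).
Proof. by apply/fE; left. Qed.

Lemma dm' : d < m.
Proof. move: dm m3; lia. Qed.

Lemma inw2 x : x \in w2.
Proof.
rewrite /w2 mem_pmap; apply/mapP; case: x => [i|a].
  exists (3 * (0 * m + i) + 2); last by rewrite Kslot.
  by rewrite mem_iota /N2; have := ltn_ord i; nia.
exists (3 * (0 * m + a) + 1); last by rewrite Eres.
by rewrite mem_iota /N2; have := ltn_ord a; nia.
Qed.

Lemma altKK (i j : 'I_m) : i != j -> alternate w2 (inl i) (inl j).
Proof.
move=> ij.
have claim : forall (c c' : 'I_m) s s', c != c' -> s < s' -> f2 s = Some (inl c) ->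
    f2 s' = Some (inl c) -> exists h, s < h < s' /\ f2 h = Some (inl c').
  move=> c c' s s' cc' ss' /fK [q [qm es]] /fK [q' [q'm es']]; subst s s'.
  have qq : q < q' by have := ltn_ord c; nia.
  have [cl|cg] := ltnP c c'.
    exists (3 * (q * m + c') + 2); rewrite Kslot //.
    by split => //; have := ltn_ord c'; have := ltn_ord c; nia.
  have cg' : c' < c by rewrite ltn_neqAle eq_sym cc' cg.
  exists (3 * (q.+1 * m + c') + 2); rewrite Kslot //; last exact: leq_trans qq q'm.
  by split => //; have := ltn_ord c'; have := ltn_ord c; nia.
apply: alt_slots => s s' ss' hs hs' hb; apply/negP => /eqP ess'.
case/orP: hs => /eqP fs.
  have [h [hh fh]] := claim i j s s' ij ss' fs (etrans (esym ess') fs).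
  by move: (hb h hh); rewrite fh eqxx orbT.
have [h [hh fh]] := claim j i s s' (negbT (introF eqP (fun e => (negP ij) (introT eqP (esym e))))) ss' fs (etrans (esym ess') fs).
by move: (hb h hh); rewrite fh eqxx.
Qed.

Lemma altKE (a i : 'I_m) : dist m a i < d -> alternate w2 (inr a) (inl i).
Proof.
move=> kd.
have am := ltn_ord a; have im := ltn_ord i; have dm2 := dm'.
apply: alt_slots => s s' ss' hs hs' hb; apply/negP => /eqP ess'.
case/orP: hs => /eqP fs; have fs' := etrans (esym ess') fs.
  suff [h [hh fh]] : exists h, s < h < s' /\ f2 h = Some (inl i).
    by move: (hb h hh); rewrite fh eqxx orbT.
  case/fE: fs => [es|[q [qm qa es]]]; case/fE: fs' => [es'|[q' [q'm q'a es']]]; subst s s'.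
  - by move: ss'; rewrite ltnn.
  -
    have q'2 : a.+2 <= q'.
      have : a < q' by move: ss'; nia.
      by move: q'a; lia.
    move: kd; rewrite /dist; case: (leqP a i) => ai kd.
      exists (3 * (a.+1 * m + i) + 2); rewrite Kslot; [by split => //; nia | lia].
    exists (3 * (a.+2 * m + i) + 2); rewrite Kslot; [by split => //; nia | lia].
  -
    have qa' : q <= a by move: ss'; nia.
    move: kd; rewrite /dist; case: (leqP a i) => ai kd.
      exists (3 * (q * m + i) + 2); rewrite Kslot; [by split => //; nia | lia].
    exists (3 * (q.+1 * m + i) + 2); rewrite Kslot; [by split => //; nia | lia].
  - have qq : q < q' by move: ss'; nia.
    move: kd; rewrite /dist; case: (leqP a i) => ai kd.
      exists (3 * (q * m + i) + 2); rewrite Kslot; [by split => //; nia | lia].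
    exists (3 * (q.+1 * m + i) + 2); rewrite Kslot; [by split => //; nia | lia].
suff [h [hh fh]] : exists h, s < h < s' /\ f2 h = Some (inr a).
  by move: (hb h hh); rewrite fh eqxx.
case/fK: fs => q [qm es]; case/fK: fs' => q' [q'm es']; subst s s'.
have qq : q < q' by move: ss'; nia.
move: kd; rewrite /dist; case: (leqP a i) => ai kd.
  case: (eqVneq q a) => [qa|qa].
    subst q; exists (3 * (a * m.+1 + d)); rewrite Etend; split => //; nia.
  exists (3 * (q.+1 * m + a) + 1); rewrite Eres; [by split => //; nia | lia | by rewrite eqSS].
case: (eqVneq q a.+1) => [qa|qa].
  subst q; exists (3 * (a * m.+1 + d)); rewrite Etend; split => //; nia.
exists (3 * (q * m + a) + 1); rewrite Eres; [by split => //; nia | lia | by []].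
Qed.

Lemma naltKE (a i : 'I_m) : d <= dist m a i -> ~ alternate w2 (inr a) (inl i).
Proof.
move=> kd.
have am := ltn_ord a; have im := ltn_ord i; have dm2 := dm'.
apply: (@nalt_slots _ f2 N2 (3 * (a * m + a) + 1) (3 * (a * m.+1 + d))).
- by rewrite /N2; apply/andP; split; nia.
- by apply: Eres; lia.
- exact: Etend.
move=> h hh; apply/negP => /eqP/fK [q [qm eh]]; subst h.
move: kd; rewrite /dist; case: (leqP a i) => ai kd.
  have : q = a by move: hh; nia.
  by move=> qa; subst q; move: hh; nia.
have : q = a.+1 by move: hh; nia.
by move=> qa; subst q; move: hh; nia.
Qed.

Lemma naltEE (a b : 'I_m) : a != b -> d <= dist m a b -> ~ alternate w2 (inr a) (inr b).
Proof.
move=> ab kd.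
have am := ltn_ord a; have bm := ltn_ord b; have dm2 := dm'.
apply: (@nalt_slots _ f2 N2 (3 * (a * m + a) + 1) (3 * (a * m.+1 + d))).
- by rewrite /N2; apply/andP; split; nia.
- by apply: Eres; lia.
- exact: Etend.
move=> h hh; apply/negP => /eqP/fE [eh|[q [qm qb eh]]]; subst h.
  have : b < a by move: hh; nia.
  by move=> ba; move: hh; nia.
move: kd; rewrite /dist; case: (leqP a b) => ab' kd.
  have : q = a by move: hh; nia.
  by move=> qa; subst q; move: hh; nia.
have : q = a.+1 by move: hh; nia.
by move=> qa; subst q; move: hh; nia.
Qed.

Lemma dist_sum (a b : 'I_m) : a != b -> dist m a b + dist m b a = m.
Proof.
move=> ab; have am := ltn_ord a; have bm := ltn_ord b.
have ab' : (a : nat) <> b by move=> e; move/eqP: ab; apply; apply: val_inj.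
rewrite /dist; case: (leqP a b) => h1; case: (leqP b a) => h2; lia.
Qed.

Lemma represents2 : represents e2 w2.
Proof.
split; first exact: inw2.
have EE : forall a b : 'I_m, a != b -> ~ alternate w2 (inr a) (inr b).
  move=> a b ab; case: (leqP d (dist m a b)) => h; first exact: naltEE.
  rewrite alternate_sym; apply: naltEE; first by rewrite eq_sym.
  have := dist_sum ab; have := dm; lia.
case=> [i|a] [j|b] xy /=.
- have ij : i != j by apply: contra xy => /eqP ->.
  by rewrite ij; split => // _; apply: altKK.
- rewrite alternate_sym; case: (ltnP (dist m b i) d) => h.
    by split => // _; apply: altKE.
  split => [alt|lt]; [exfalso; exact: naltKE h alt | by move: lt h => /=; lia].
- case: (ltnP (dist m a j) d) => h.
    by split => // _; apply: altKE.
  split => [alt|lt]; [exfalso; exact: naltKE h alt | by move: lt h => /=; lia].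
- have ab : a != b by apply: contra xy => /eqP ->.
  by split => // /(EE _ _ ab).
Qed.

Definition K2 : {set T2} := inl @: [set: 'I_m].
Definition E2 : {set T2} := inr @: [set: 'I_m].

Lemma inK2 x : (x \in K2) = (if x is inl _ then true else false).
Proof.
case: x => [i|a]; apply/imsetP; first by exists i.
by case.
Qed.

Lemma inE2 x : (x \in E2) = (if x is inr _ then true else false).
Proof.
case: x => [i|a]; apply/imsetP; last by exists a.
by case.
Qed.

Lemma simple2 : simple_graph e2.
Proof.
split; first by case=> [i|a] /=; rewrite ?eqxx.
by case=> [i|a] [j|b] //=; rewrite eq_sym.
Qed.

Lemma split2 : split_graph e2 E2 K2.
Proof.
split.
- by rewrite -setI_eq0; apply/eqP/setP => x; rewrite !inE inK2 inE2; case: x.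
- by apply/setP => x; rewrite !inE inK2 inE2; case: x.
- by move=> [i|a] [j|b]; rewrite ?inK2 //= => _ _ xy; apply: contra xy => /eqP ->.
- by move=> [i|a] [j|b]; rewrite ?inE2.
- case=> [i|a]; rewrite inK2 // => _.
  exists (inl (inord (if a == 0 :> nat then n else a.-1))); first by rewrite inK2.
  have am := ltn_ord a.
  rewrite /= -leqNgt inordK; last by case: eqP => _; lia.
  rewrite /dist; case: eqP => h.
    by rewrite h /= subn0; move: dm m3; lia.
  have -> : (a <= a.-1) = false by move: h; lia.
  by move: dm m3 h; lia.
Qed.

Lemma cardK2 : #|K2| = m.
Proof. by rewrite card_imset ?cardsT ?card_ord //; apply: inl_inj. Qed.

Lemma cardE2 : #|E2| = m.
Proof. by rewrite card_imset ?cardsT ?card_ord //; apply: inr_inj. Qed.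

Lemma deg2 (a : 'I_m) : degree e2 (inr a) = d.
Proof.
have am := ltn_ord a; have dm2 := dm'; rewrite /degree.
have -> : nbhd e2 (inr a) =
   (fun k : 'I_d => inl (inord (pos m a k)) : T2) @: [set: 'I_d].
  apply/setP => x; rewrite inE; apply/idP/imsetP.
    case: x => [i|b] //= h.
    exists (Ordinal h); first by rewrite inE.
    by rewrite /= pos_dist // inord_val.
  move=> [k _ ->] /=.
  have km : k < m := ltn_trans (ltn_ord k) dm2.
  by rewrite inordK ?pos_lt // dist_pos.
rewrite card_imset ?cardsT ?card_ord // => k1 k2 [] /(congr1 val).
have k1m : k1 < m := ltn_trans (ltn_ord k1) dm2.
have k2m : k2 < m := ltn_trans (ltn_ord k2) dm2.
rewrite /= !inordK ?pos_lt // => /(congr1 (dist m a)).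
by rewrite !dist_pos // => /val_inj.
Qed.

Lemma inj2 : {in E2 &, injective (nbhd e2)}.
Proof.
move=> [i|a] [j|b]; rewrite ?inE2 // => _ _ eN.
have aa : inl a \in nbhd e2 (inr a) by rewrite inE /= /dist leqnn subnn; move: d2; lia.
have bb : inl b \in nbhd e2 (inr b) by rewrite inE /= /dist leqnn subnn; move: d2; lia.
rewrite eN inE /= in aa; rewrite -eN inE /= in bb.
case: (eqVneq a b) => [->//|ab].
by have := dist_sum ab; move: aa bb dm; lia.
Qed.

End Constr.

Theorem part2 (m d : nat) : 3 <= m -> 2 <= d -> d.*2 <= m.+1 ->
    exists (T : finType) (e : rel T) (E K : {set T}),
      [/\ simple_graph e, split_graph e E K, #|K| = m,
          word_representable e &
          exists A : {set T},
            [/\ A \subset E, #|A| = m,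
                (forall v, v \in A -> degree e v = d) &
                {in A &, injective (nbhd e)}]].
Proof.
case: m => [//|n] m3 d2 dm.
exists (T2 n), (@e2 n d), (@E2 n), (@K2 n); split.
- exact: simple2.
- exact: split2.
- exact: cardK2.
- by exists (w2 n d); apply: represents2.
exists (@E2 n); split => //.
- exact: cardE2.
- by move=> [i|a]; rewrite inE2 // => _; apply: deg2.
- exact: inj2.
Qed.

Theorem theorem12 :
  (forall (T : finType) (e : rel T) (E K : {set T}) (m d : nat),
      simple_graph e -> split_graph e E K -> #|K| = m ->
      word_representable e ->
      3 <= m -> 2 <= d -> d.*2 <= m.+1 ->
      forall A : {set T},
        A \subset E ->
        (forall v, v \in A -> degree e v = d) ->
        {in A &, injective (nbhd e)} ->
        #|A| <= m)
  /\
  (forall m d : nat, 3 <= m -> 2 <= d -> d.*2 <= m.+1 ->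
    exists (T : finType) (e : rel T) (E K : {set T}),
      [/\ simple_graph e, split_graph e E K, #|K| = m,
          word_representable e &
          exists A : {set T},
            [/\ A \subset E, #|A| = m,
                (forall v, v \in A -> degree e v = d) &
                {in A &, injective (nbhd e)}]]).
Proof.
split.
  exact: part1.
exact: part2.
Qed.
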